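(* Let $A$ be a real symmetric matrix, normalized so that the minimal entry of every row and every column is $0$, and suppose $A$ has symmetric tropical rank two. Then after possibly a diagonal permutation, $A$ has the block structure $$\begin{pmatrix}\mathbf 0&\mathbf 0&\mathbf 0&\mathbf 0&\mathbf 0\\ \mathbf 0&B_1&\mathbf 0&\mathbf 0&\mathbf 0\\ \mathbf 0&\mathbf 0&B_2&\mathbf 0&\mathbf 0\\ \mathbf 0&\mathbf 0&\mathbf 0&\mathbf 0&C\\ \mathbf 0&\mathbf 0&\mathbf 0&C^{T}&\mathbf 0\end{pmatrix},$$ where $B_1,B_2$ are symmetric with all entries positive, $C$ has all entries nonnegative and no column consisting entirely of zeros, and each $\mathbf 0$ is a zero matrix of appropriate size; any of the blocks (the initial block of all-zero rows/columns, $B_1$, $B_2$, $C$) may have size zero. Moreover, $A$ is neither the zero matrix nor a matrix consisting of just one of the positive blocks $B_1$ or $B_2$.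
   Context: A diagonal permutation of a square matrix permutes its rows and its columns by the same permutation. For an $r\times r$ submatrix of a real symmetric matrix $A$ with row index set $I$ and column index set $J$, each bijection $\rho:I\to J$ gives a monomial $\prod_{i\in I}X_{i,\rho(i)}$ in commuting variables subject to $X_{i,j}=X_{j,i}$, with value $\sum_{i\in I}A_{i,\rho(i)}$; the submatrix is symmetrically tropically singular if the minimum value is attained by at least two distinct monomials. The symmetric tropical rank of $A$ is the largest $r$ such that $A$ has an $r\times r$ submatrix that is not symmetrically tropically singular. *)

(* Defs.v *)
From HB Require Import structures.
From mathcomp Require Import all_boot all_order all_algebra all_fingroup.
Set Implicit Arguments. Unset Strict Implicit. Unset Printing Implicit Defensive.
Import Order.TTheory GRing.Theory Num.Theory.
Local Open Scope ring_scope.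

Section TropRank.
Variables (R : realFieldType) (n : nat).

Definition is_bij (I J : {set 'I_n}) (rho : 'I_n -> 'I_n) : Prop :=
  {in I &, injective rho} /\ rho @: I = J.

(* value of the monomial prod_{i in I} X_{i,rho i} : sum_{i in I} A_{i,rho i} *)
Definition mono_val (A : 'M[R]_n) (I : {set 'I_n}) (rho : 'I_n -> 'I_n) : R :=
  \sum_(i in I) A i (rho i).

(* exponent of the (symmetric) variable X_{a,b} = X_{b,a} in prod_{i in I} X_{i,rho i} *)
Definition mono_exp (I : {set 'I_n}) (rho : 'I_n -> 'I_n) (a b : 'I_n) : nat :=
  #|[set i in I | ((i == a) && (rho i == b)) || ((i == b) && (rho i == a))]|.

Definition same_mono (I : {set 'I_n}) (rho1 rho2 : 'I_n -> 'I_n) : Prop :=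
  forall a b, mono_exp I rho1 a b = mono_exp I rho2 a b.

Definition sym_trop_singular (A : 'M[R]_n) (I J : {set 'I_n}) : Prop :=
  exists rho1 rho2 : 'I_n -> 'I_n,
    [/\ is_bij I J rho1, is_bij I J rho2,
        (forall rho, is_bij I J rho -> mono_val A I rho1 <= mono_val A I rho),
        mono_val A I rho2 = mono_val A I rho1
      & ~ same_mono I rho1 rho2].

Definition sym_trop_rank_is (A : 'M[R]_n) (r : nat) : Prop :=
  (exists I J : {set 'I_n}, [/\ #|I| = r, #|J| = r & ~ sym_trop_singular A I J])
  /\ (forall I J : {set 'I_n}, #|I| = #|J| -> (r < #|I|)%N -> sym_trop_singular A I J).

Definition normalized (A : 'M[R]_n) : Prop :=
  (forall i, (forall j, 0 <= A i j) /\ exists j, A i j = 0) /\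
  (forall j, (forall i, 0 <= A i j) /\ exists i, A i j = 0).

End TropRank.

Definition blk5 (R : realFieldType) (n0 n1 n2 n3 n4 : nat)
  (B1 : 'M[R]_n1) (B2 : 'M[R]_n2) (C : 'M[R]_(n3, n4))
  : 'M[R]_(n0 + (n1 + (n2 + (n3 + n4)))) :=
  block_mx (0 : 'M[R]_(n0, n0)) 0 0
    (block_mx B1 0 0 (block_mx B2 0 0 (block_mx (0 : 'M[R]_(n3, n3)) C C^T 0))).

(* Main.v *)
Require Import Defs.
From HB Require Import structures.
From mathcomp Require Import all_boot all_order all_algebra all_fingroup zify.
Import Order.TTheory GRing.Theory Num.Theory.
Local Open Scope ring_scope.
Set Implicit Arguments. Unset Strict Implicit. Unset Printing Implicit Defensive.

Lemma card3 (n : nat) (a b c : 'I_n) : a != b -> a != c -> b != c ->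
  #|[set a; b; c]| = 3%N.
Proof.
move=> ab ac bc; by rewrite setUC cardsU1 cards2 !inE ab ![c == _]eq_sym (negbTE ac) (negbTE bc).

Qed.

Lemma bij_of (n : nat) (I J : {set 'I_n}) (rho : 'I_n -> 'I_n) :
  {in I &, injective rho} -> (forall x, x \in I -> rho x \in J) -> #|I| = #|J| ->
  is_bij I J rho.
Proof.
move=> inj sub cIJ; split => //; apply/eqP; rewrite eqEcard card_in_imset // cIJ leqnn andbT.
by apply/subsetP => y /imsetP [x xI ->]; apply: sub.
Qed.

Lemma bij_in (n : nat) (I J : {set 'I_n}) (rho : 'I_n -> 'I_n) x :
  is_bij I J rho -> x \in I -> rho x \in J.
Proof. by case=> _ <- xI; apply: imset_f. Qed.

Lemma same_mono_eq (n : nat) (I : {set 'I_n}) r1 r2 :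
  {in I, r1 =1 r2} -> same_mono I r1 r2.
Proof.
move=> e a b; rewrite /mono_exp; apply: eq_card => i; rewrite !inE.
by case iI: (i \in I) => //=; rewrite e.
Qed.

Lemma same_mono_inv (n : nat) (I : {set 'I_n}) r1 r2 :
  (forall i, i \in I -> r1 i \in I) -> (forall i, i \in I -> r2 i \in I) ->
  (forall i, i \in I -> r2 (r1 i) = i) -> (forall i, i \in I -> r1 (r2 i) = i) ->
  same_mono I r1 r2.
Proof.
have key: forall r1 r2 : 'I_n -> 'I_n, (forall i, i \in I -> r1 i \in I) ->
  (forall i, i \in I -> r2 (r1 i) = i) -> forall a b, (mono_exp I r1 a b <= mono_exp I r2 a b)%N.
  move=> f g fI gf a b; rewrite /mono_exp.
  set S1 := [set i in I | _]; set S2 := [set i in I | _].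
  rewrite -(card_in_imset (f := f) (D := mem S1)); last first.
    move=> x y; rewrite !inE => /andP[xI _] /andP[yI _] e.
    by rewrite -(gf x xI) e gf.
  apply: subset_leq_card; apply/subsetP => y /imsetP [x]; rewrite !inE => /andP[xI hx] ->.
  rewrite fI //= gf //.
  case/orP: hx => /andP[/eqP-> /eqP->]; by rewrite !eqxx ?orbT.
move=> h1 h2 h3 h4 a b; apply/eqP; rewrite eqn_leq !key //.
Qed.

Section Main.
Variables (R : realFieldType) (n : nat) (A : 'M[R]_n).
Hypothesis nonneg : forall i j, 0 <= A i j.

Lemma unique_zero_nonsing (I J : {set 'I_n}) rho0 :
  is_bij I J rho0 -> (forall x, x \in I -> A x (rho0 x) = 0) ->
  (forall rho, is_bij I J rho -> (forall x, x \in I -> A x (rho x) = 0) ->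
      {in I, rho =1 rho0}) ->
  ~ sym_trop_singular A I J.
Proof.
move=> b0 z0 uniq [r1 [r2 [b1 b2 mn e ns]]].
have v0 : mono_val A I rho0 = 0 by apply: big1 => i; apply: z0.
have v1 : mono_val A I r1 = 0.
  by apply/le_anti; rewrite -{1}v0 mn //= sumr_ge0.
have z1 := psumr_eq0P (fun i _ => nonneg i (r1 i)) v1.
have z2 := psumr_eq0P (fun i _ => nonneg i (r2 i)) (etrans e v1).
apply: ns; apply: same_mono_eq => i iI.
by rewrite (uniq r1) ?(uniq r2) // => x xI; first [exact: z1 x xI | exact: z2 x xI].
Qed.
End Main.
Lemma in3P (n : nat) (x a b c : 'I_n) : x \in [set a; b; c] -> [\/ x = a, x = b | x = c].
Proof. by rewrite !inE => /orP[/orP[]|] /eqP; [constructor 1|constructor 2|constructor 3]. Qed.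

Lemma mem3 (n : nat) (a b c : 'I_n) : [/\ a \in [set a; b; c], b \in [set a; b; c] & c \in [set a; b; c]].
Proof. by rewrite !inE !eqxx ?orbT. Qed.

Definition f3 (n : nat) (a b c a' b' c' : 'I_n) := fun x => if x == a then a' else if x == b then b' else c'.

Lemma f3E (n : nat) (a b c a' b' c' : 'I_n) : a != b -> a != c -> b != c ->
  [/\ f3 a b c a' b' c' a = a', f3 a b c a' b' c' b = b' & f3 a b c a' b' c' c = c'].
Proof.
move=> ab ac bc; rewrite /f3 eqxx; split => //; first by rewrite eq_sym (negbTE ab) eqxx.
by rewrite eq_sym (negbTE ac) eq_sym (negbTE bc).
Qed.

Lemma f3_bij (n : nat) (a b c a' b' c' : 'I_n) : a != b -> a != c -> b != c ->
  a' != b' -> a' != c' -> b' != c' ->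
  is_bij [set a; b; c] [set a'; b'; c'] (f3 a b c a' b' c').
Proof.
move=> ab ac bc ab' ac' bc'; have [ea eb ec] := f3E a' b' c' ab ac bc.
apply: bij_of; last by rewrite !card3.
  move=> x y /in3P[]-> /in3P[]->; rewrite ?ea ?eb ?ec // => e;
  by [rewrite e eqxx in ab' | rewrite e eqxx in ac' | rewrite e eqxx in bc'].
by move=> x /in3P[]->; rewrite ?ea ?eb ?ec !inE eqxx ?orbT.
Qed.

Section Rules.
Variables (R : realFieldType) (n : nat) (A : 'M[R]_n).
Hypothesis nonneg : forall i j, 0 <= A i j.
Hypothesis symA : forall i j, A i j = A j i.
Hypothesis rk3 : forall I J : {set 'I_n}, #|I| = #|J| -> (2 < #|I|)%N -> sym_trop_singular A I J.

Lemma nonsing3 (a b c a' b' c' : 'I_n) : a != b -> a != c -> b != c ->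
  a' != b' -> a' != c' -> b' != c' ->
  A a a' = 0 -> A b b' = 0 -> A c c' = 0 ->
  (forall rho, is_bij [set a; b; c] [set a'; b'; c'] rho ->
     (forall x, x \in [set a; b; c] -> A x (rho x) = 0) ->
     [/\ rho a = a', rho b = b' & rho c = c']) -> False.
Proof.
move=> ab ac bc ab' ac' bc' za zb zc U.
have [ea eb ec] := f3E a' b' c' ab ac bc.
apply: (unique_zero_nonsing nonneg (f3_bij ab ac bc ab' ac' bc')).
- by move=> x /in3P[]->; rewrite ?ea ?eb ?ec.
- move=> rho br zr; have [ra rb rc] := U rho br zr.
  by move=> x /in3P[]->; rewrite ?ea ?eb ?ec.
- by apply: rk3; rewrite !card3.
Qed.
End Rules.

Lemma neqE (R : realFieldType) (n : nat) (f : 'I_n -> R) y z : f y = 0 -> f z != 0 -> y != z.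
Proof. by move=> h1 h2; apply/eqP=> e; rewrite -e h1 eqxx in h2. Qed.

Ltac kill := match goal with
| H : ?a = 0, H' : is_true (?a != 0) |- _ => by rewrite H eqxx in H'
| H1 : ?r ?x = ?v, H2 : ?r ?y = ?v, D : is_true (?x != ?y), inj : {in _ &, injective ?r} |- _ =>
    by case/eqP: D; apply: inj; rewrite ?H1 ?H2 // !inE eqxx ?orbT
end.

Ltac split3 br x := let e := fresh "e" in let z := fresh "z" in
  case/in3P: (bij_in br (x := x) ltac:(by rewrite !inE eqxx ?orbT)) => e;
  have z := zr x ltac:(by rewrite !inE eqxx ?orbT); rewrite e in z; try kill.

Section Rules2.
Variables (R : realFieldType) (n : nat) (A : 'M[R]_n).
Hypothesis nonneg : forall i j, 0 <= A i j.
Hypothesis symA : forall i j, A i j = A j i.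
Hypothesis rk3 : forall I J : {set 'I_n}, #|I| = #|J| -> (2 < #|I|)%N -> sym_trop_singular A I J.

Lemma rule1 i j k : A i i != 0 -> A j j = 0 -> A i k = 0 -> A i j = 0.
Proof.
move=> Aii Ajj Aik; case: (eqVneq (A i j) 0) => // Aij.
have Aji : A j i != 0 by rewrite symA.
have Aki : A k i = 0 by rewrite symA.
have ij : i != j by rewrite eq_sym; apply: (neqE (f := fun t => A t t)).
have ik : i != k by rewrite eq_sym; apply: (neqE (f := A i)).
have jk : j != k by rewrite eq_sym; apply: (neqE (f := A i)).
have ji : j != i by rewrite eq_sym.
have ki : k != i by rewrite eq_sym.
have kj : k != j by rewrite eq_sym.
exfalso; apply: (nonsing3 nonneg rk3 (a' := k) (b' := j) (c' := i) ij ik jk kj ki ji) => //.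
move=> rho br zr; have inj := br.1.
split3 br i; split3 br j; split3 br k; by split.
Qed.
End Rules2.

Section Rules3.
Variables (R : realFieldType) (n : nat) (A : 'M[R]_n).
Hypothesis nonneg : forall i j, 0 <= A i j.
Hypothesis symA : forall i j, A i j = A j i.
Hypothesis rk3 : forall I J : {set 'I_n}, #|I| = #|J| -> (2 < #|I|)%N -> sym_trop_singular A I J.

Lemma rule2 i j k m : A i i != 0 -> A i j != 0 -> A i k != 0 -> A j j != 0 -> A i m = 0 ->
  j != k -> A j k != 0.
Proof.
move=> Aii Aij Aik Ajj Aim jk; case: (eqVneq (A j k) 0) => // Ajk; exfalso.
have Akj : A k j = 0 by rewrite symA.
have Aji : A j i != 0 by rewrite symA.
have ij : i != j by rewrite eq_sym; apply: (neqE (f := fun t => A t k)).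
have ik : i != k by rewrite eq_sym; apply: (neqE (f := fun t => A j t)).
have mk : m != k by apply: (neqE (f := A i)).
have mj : m != j by apply: (neqE (f := A i)).
have kj : k != j by rewrite eq_sym.
have ji : j != i by rewrite eq_sym.
have ki : k != i by rewrite eq_sym.
have jm : j != m by rewrite eq_sym.
have km : k != m by rewrite eq_sym.
apply: (nonsing3 nonneg rk3 (a' := m) (b' := k) (c' := j) ij ik jk mk mj kj) => //.
move=> rho br zr; have inj := br.1.
split3 br i; split3 br j; split3 br k; by split.
Qed.

Lemma rule4 a b c : A a a = 0 -> A b b = 0 -> A c c = 0 -> A a b != 0 -> A b c != 0 ->
  a != c -> A a c = 0.
Proof.
move=> Aaa Abb Acc Aab Abc ac; case: (eqVneq (A a c) 0) => // Aac; exfalso.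
have Aba : A b a != 0 by rewrite symA.
have Acb : A c b != 0 by rewrite symA.
have Aca : A c a != 0 by rewrite symA.
have ab : a != b by apply: (neqE (f := A a)).
have bc : b != c by apply: (neqE (f := A b)).
have ba : b != a by rewrite eq_sym.
have cb : c != b by rewrite eq_sym.
have ca : c != a by rewrite eq_sym.
apply: (nonsing3 nonneg rk3 (a' := a) (b' := b) (c' := c) ab ac bc ab ac bc) => //.
move=> rho br zr; have inj := br.1.
split3 br a; split3 br b; split3 br c; by split.
Qed.

Lemma rule5 a b c d : A b b = 0 -> A c c = 0 -> A a b != 0 -> A b c != 0 -> A c d != 0 ->
  A a c = 0 -> A b d = 0 -> A a d != 0.
Proof.
move=> Abb Acc Aab Abc Acd Aac Abd; case: (eqVneq (A a d) 0) => // Aad; exfalso.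
have Acb : A c b != 0 by rewrite symA.
have ab : a != b by rewrite eq_sym; apply: (neqE (f := fun t => A t b)).
have ac : a != c by apply: (neqE (f := fun t => A t d)).
have bc : b != c by apply: (neqE (f := A b)).
have bd : b != d by rewrite eq_sym; apply: (neqE (f := A a)).
have cd : c != d by apply: (neqE (f := A c)).
have ba : b != a by rewrite eq_sym.
have cb : c != b by rewrite eq_sym.
have ca : c != a by rewrite eq_sym.
have db : d != b by rewrite eq_sym.
have dc : d != c by rewrite eq_sym.
apply: (nonsing3 nonneg rk3 (a' := d) (b' := b) (c' := c) ab ac bc db dc bc) => //.
move=> rho br zr; have inj := br.1.
split3 br c; split3 br a; split3 br b; by split.
Qed.

Lemma der3 x y z rho : x != y -> x != z -> y != z ->
  A x x != 0 -> A y y != 0 -> A z z != 0 ->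
  is_bij [set x; y; z] [set x; y; z] rho ->
  (forall t, t \in [set x; y; z] -> A t (rho t) = 0) ->
  (rho x = y /\ rho y = z /\ rho z = x) \/ (rho x = z /\ rho z = y /\ rho y = x).
Proof.
move=> xy xz yz Axx Ayy Azz br zr; have inj := br.1.
have yx : y != x by rewrite eq_sym.
have zx : z != x by rewrite eq_sym.
have zy : z != y by rewrite eq_sym.
split3 br x; split3 br y; split3 br z; by [left | right].
Qed.

Lemma rule3 x y z : A x x != 0 -> A y y != 0 -> A z z != 0 ->
  A x y = 0 -> A x z = 0 -> A y z = 0 -> False.
Proof.
move=> Axx Ayy Azz Axy Axz Ayz.
have Ayx : A y x = 0 by rewrite symA.
have Azx : A z x = 0 by rewrite symA.
have Azy : A z y = 0 by rewrite symA.
have xy : x != y by rewrite eq_sym; apply: (neqE (f := A x)).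
have xz : x != z by rewrite eq_sym; apply: (neqE (f := A x)).
have yz : y != z by rewrite eq_sym; apply: (neqE (f := A y)).
have yx : y != x by rewrite eq_sym.
have zx : z != x by rewrite eq_sym.
have zy : z != y by rewrite eq_sym.
have [ea eb ec] := f3E y z x xy xz yz.
have b0 := f3_bij xy xz yz (yz : y != z) (yx : y != x) (zx : z != x).
have b0' : is_bij [set x; y; z] [set x; y; z] (f3 x y z y z x).
  apply: bij_of; first exact: b0.1.
    move=> t tI; have := bij_in b0 tI; rewrite !inE; by case/orP=>[/orP[]|] ->; rewrite ?orbT.
  by [].
have [r1 [r2 [b1 b2 mn e ns]]] := rk3 (I := [set x; y; z]) (J := [set x; y; z]) erefl
   ltac:(by rewrite card3).
have v0 : mono_val A [set x; y; z] (f3 x y z y z x) = 0.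
  by apply: big1 => t /in3P[]->; rewrite ?ea ?eb ?ec.
have v1 : mono_val A [set x; y; z] r1 = 0.
  by apply/le_anti; rewrite -{1}v0 mn //= sumr_ge0.
have z1 := psumr_eq0P (fun i _ => nonneg i (r1 i)) v1.
have z2 := psumr_eq0P (fun i _ => nonneg i (r2 i)) (etrans e v1).
apply: ns.
have m1 : forall t, t \in [set x; y; z] -> r1 t \in [set x; y; z] by move=> t; apply: bij_in.
have m2 : forall t, t \in [set x; y; z] -> r2 t \in [set x; y; z] by move=> t; apply: bij_in.
case: (der3 xy xz yz Axx Ayy Azz b1 z1) => [[h1 [h2 h3]]|[h1 [h2 h3]]];
case: (der3 xy xz yz Axx Ayy Azz b2 z2) => [[g1 [g2 g3]]|[g1 [g2 g3]]].
- by apply: same_mono_eq => t /in3P[]->; congruence.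
- by apply: same_mono_inv => // t /in3P[]->; congruence.
- by apply: same_mono_inv => // t /in3P[]->; congruence.
- by apply: same_mono_eq => t /in3P[]->; congruence.
Qed.
End Rules3.

Definition posc (n0 n1 n2 n3 p : nat) : nat :=
  if (p < n0)%N then 0%N else if (p - n0 < n1)%N then 1%N else
  if (p - n0 - n1 < n2)%N then 2%N else if (p - n0 - n1 - n2 < n3)%N then 3%N else 4%N.

Lemma count5 (T : eqType) (c : T -> nat) (s : seq T) : all (fun u => c u < 5)%N s ->
  (count (fun u => c u == 0%N) s + (count (fun u => c u == 1%N) s + (count (fun u => c u == 2%N) s +
   (count (fun u => c u == 3%N) s + count (fun u => c u == 4%N) s))))%N = size s.
Proof.
elim: s => //= x s IH /andP[cx /IH <-].
by case: (c x) cx => [|[|[|[|[|k]]]]] //= _; lia.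
Qed.

Lemma sort_perm (n : nat) (c : 'I_n -> nat) : (forall u, c u < 5)%N ->
  exists (n0 n1 n2 n3 n4 : nat) (h : (n0 + (n1 + (n2 + (n3 + n4))))%N = n) (s : 'S_n),
    forall p : 'I_n, c (s p) = posc n0 n1 n2 n3 p.
Proof.
move=> c5.
pose L k := [seq u <- ord_enum n | c u == k].
pose Ls := L 0%N ++ L 1%N ++ L 2%N ++ L 3%N ++ L 4%N.
have sz : size Ls = n.
  rewrite !size_cat !size_filter count5 ?size_map ?size_enum_ord //.
    by rewrite -(size_map val) val_ord_enum size_iota.
  by apply/allP => u _; apply: c5.
have memL : forall u, u \in Ls.
  move=> u; rewrite /Ls /L !mem_cat !mem_filter !mem_ord_enum !andbT.
  by case: (c u) (c5 u) => [|[|[|[|[|k]]]]].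
have uL : uniq Ls.
  apply/card_uniqP; rewrite sz -[RHS]card_ord; apply: eq_card => u.
  by rewrite memL inE.
pose f (p : 'I_n) := nth p Ls p.
have f_inj : injective f.
  move=> p q; rewrite /f (set_nth_default p q) ?sz //; move/eqP.
  by rewrite nth_uniq ?sz // => /eqP /val_inj.
exists (size (L 0%N)), (size (L 1%N)), (size (L 2%N)), (size (L 3%N)), (size (L 4%N)).
have h : (size (L 0%N) + (size (L 1%N) + (size (L 2%N) + (size (L 3%N) + size (L 4%N)))))%N = n.
  by move: sz; rewrite !size_cat.
exists h, (perm f_inj) => p; rewrite permE /f /posc.
have pn : (p < size Ls)%N by rewrite sz.
have inL : forall k x, x \in L k -> c x = k by move=> k x; rewrite mem_filter => /andP[/eqP].
rewrite nth_cat; case: ifP => h0; first by apply: inL; apply: mem_nth.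
rewrite nth_cat; case: ifP => h1; first by apply: inL; apply: mem_nth.
rewrite nth_cat; case: ifP => h2; first by apply: inL; apply: mem_nth.
rewrite nth_cat; case: ifP => h3; first by apply: inL; apply: mem_nth.
apply: inL; apply: mem_nth; move: pn h0 h1 h2 h3; rewrite !size_cat.
move: (nat_of_ord p) (size (L 0%N)) (size (L 1%N)) (size (L 2%N)) (size (L 3%N)) (size (L 4%N)) => ? ? ? ? ? ?; lia.
Qed.

Section Struct.
Variables (R : realFieldType) (n : nat) (A : 'M[R]_n).
Hypothesis nonneg : forall i j, 0 <= A i j.
Hypothesis symA : forall i j, A i j = A j i.
Hypothesis rk3 : forall I J : {set 'I_n}, #|I| = #|J| -> (2 < #|I|)%N -> sym_trop_singular A I J.
Hypothesis rowz : forall i, exists j, A i j = 0.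

Lemma L1 u v : A u u != 0 -> A v v = 0 -> A u v = 0.
Proof. move=> Auu Avv; have [k Auk] := rowz u; exact: (rule1 nonneg symA rk3 Auu Avv Auk). Qed.

Lemma L1' u v : A u v != 0 -> A u u != 0 -> A v v != 0.
Proof. by move=> Auv Auu; apply/eqP => Avv; rewrite (L1 Auu Avv) eqxx in Auv. Qed.

Lemma L1'' u v : A u v != 0 -> A v v = 0 -> A u u = 0.
Proof. move=> Auv Avv; case: (eqVneq (A u u) 0) => // Auu; by rewrite (L1 Auu Avv) eqxx in Auv. Qed.

Lemma L2 i j k : A i i != 0 -> A i j != 0 -> A i k != 0 -> A j k != 0.
Proof.
move=> Aii Aij Aik; case: (eqVneq j k) => [<-|jk]; first exact: L1' Aij Aii.
have [m Aim] := rowz i.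
exact: (rule2 nonneg symA rk3 Aii Aij Aik (L1' Aij Aii) Aim jk).
Qed.

Lemma N2N v w u x : A v v = 0 -> A w w = 0 -> A v w != 0 -> A v u != 0 -> A u x != 0 ->
  A w x != 0.
Proof.
move=> Avv Aww Avw Avu Aux.
have Auu : A u u = 0 by apply: (L1'' (v := v)); rewrite // symA.
have Axx : A x x = 0 by apply: (L1'' (v := u)); rewrite // symA.
have vw : v != w by apply: (neqE (f := A v)).
case: (eqVneq u w) => [<-|uw] //.
case: (eqVneq x v) => [->|xv]; first by rewrite symA.
case: (eqVneq x w) => [exw|xw].
  exfalso; move: Avw; rewrite (rule4 nonneg symA rk3 Avv Auu Aww Avu _ vw) ?eqxx //.
  by rewrite -exw.
have Axv : A x v = 0.
  by apply: (rule4 nonneg symA rk3 Axx Auu Avv) => //; rewrite symA.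
have Auw : A u w = 0.
  by apply: (rule4 nonneg symA rk3 Auu Avv Aww) => //; rewrite symA.
rewrite symA; apply: (rule5 nonneg symA rk3 (b := u) (c := v)) => //; by rewrite symA.
Qed.

Definition Sn u : {set 'I_n} :=
  [set x | (A u x != 0) || [exists w, (A u w != 0) && (A w x != 0)]].

Definition color u : bool := if [pick x in Sn u] is Some m then A u m != 0 else false.

Lemma SE v w : A v v = 0 -> A w w = 0 -> A v w != 0 -> Sn v = Sn w.
Proof.
move=> Avv Aww Avw; have Awv : A w v != 0 by rewrite symA.
apply/setP => x; rewrite !inE; apply/idP/idP.
- case/orP => [Avx|/existsP[u /andP[Avu Aux]]].
    by apply/orP; right; apply/existsP; exists v; rewrite Awv.
  by rewrite (N2N Avv Aww Avw Avu Aux).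
- case/orP => [Awx|/existsP[u /andP[Awu Aux]]].
    by apply/orP; right; apply/existsP; exists w; rewrite Avw.
  by rewrite (N2N Aww Avv Awv Awu Aux).
Qed.

Lemma color_diff v w : A v v = 0 -> A w w = 0 -> A v w != 0 -> color v != color w.
Proof.
move=> Avv Aww Avw; rewrite /color -(SE Avv Aww Avw).
case: pickP => [m|none]; last by move: (none w); rewrite inE Avw.
rewrite inE => mS.
have vw : v != w by apply: (neqE (f := A v)).
have h : (A v m != 0) || (A w m != 0).
  case/orP: mS => [->//|/existsP[u /andP[Avu Aum]]].
  by rewrite (N2N Avv Aww Avw Avu Aum) orbT.
move: h; case: (eqVneq (A v m) 0) => Avm /= h; first by rewrite h.
case: (eqVneq (A w m) 0) => // Awm; exfalso.
have Amm : A m m = 0 by apply: (L1'' (v := v)); rewrite // symA.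
move: Avw; rewrite (rule4 nonneg symA rk3 Avv Amm Aww Avm) ?eqxx //; by rewrite symA.
Qed.

Definition cls u : nat :=
  if A u u != 0 then
    (if [pick x | A x x != 0] is Some x then (if A x u != 0 then 1%N else 2%N) else 1%N)
  else if [forall v, A u v == 0] then 0%N
  else if color u then 3%N else 4%N.

Lemma cls_lt u : (cls u < 5)%N.
Proof. rewrite /cls; case: ifP => _; first by case: pickP => // x _; case: ifP.
by case: ifP => //; case: ifP. Qed.

Lemma cls0 u v : cls u = 0%N -> A u v = 0.
Proof.
rewrite /cls; case: ifP => _; first by case: pickP => // x _; case: ifP.
by case: ifP => [/forallP/(_ v)/eqP//|_]; case: ifP.
Qed.

Lemma cls_loop u : (A u u != 0) = ((cls u == 1%N) || (cls u == 2%N)).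
Proof.
rewrite /cls; case: ifP => _; first by case: pickP => // x _; case: ifP.
by case: ifP => //; case: ifP.
Qed.

Lemma cls34 u : (cls u == 3%N) || (cls u == 4%N) ->
  [/\ A u u = 0, exists v, A u v != 0 & color u = (cls u == 3%N)].
Proof.
rewrite /cls; case: ifP => Auu; first by case: pickP => // x _; case: ifP.
case: ifP => //= /negbT /forallPn [v Auv] _; split.
- by apply/eqP; move/negbT: Auu; rewrite negbK.
- by exists v.
- by case: (color u).
Qed.


Lemma cls12 u0 : A u0 u0 != 0 -> exists x, A x x != 0 /\
  forall u, A u u != 0 -> cls u = (if A x u != 0 then 1%N else 2%N).
Proof.
move=> Au0; rewrite /cls.
case: pickP => [x Axx|none]; last by move: (none u0); rewrite /= Au0.
by exists x; split => // u ->.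
Qed.

Lemma cls_unl u : A u u = 0 -> (exists v, A u v != 0) -> cls u = (if color u then 3%N else 4%N).
Proof.
move=> Auu [v Auv]; rewrite /cls Auu eqxx /=.
case: ifP => // /forallP /(_ v); by rewrite (negbTE Auv).
Qed.

Lemma F11 u v : cls u = 1%N -> cls v = 1%N -> A u v != 0.
Proof.
move=> cu cv; have lu : A u u != 0 by rewrite cls_loop cu.
have lv : A v v != 0 by rewrite cls_loop cv.
have [x [Axx E]] := cls12 lu; move: cu cv; rewrite !E //.
case: (eqVneq (A x u) 0) => //= Axu _; case: (eqVneq (A x v) 0) => //= Axv _.
exact: L2 Axx Axu Axv.
Qed.

Lemma F22 u v : cls u = 2%N -> cls v = 2%N -> A u v != 0.
Proof.
move=> cu cv; have lu : A u u != 0 by rewrite cls_loop cu orbT.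
have lv : A v v != 0 by rewrite cls_loop cv orbT.
have [x [Axx E]] := cls12 lu; move: cu cv; rewrite !E //.
case: (eqVneq (A x u) 0) => //= Axu _; case: (eqVneq (A x v) 0) => //= Axv _.
case: (eqVneq u v) => [<-//|uv].
case: (eqVneq (A u v) 0) => // Auv; exfalso.
exact: (rule3 nonneg symA rk3 Axx lu lv Axu Axv Auv).
Qed.

Lemma F12 u v : cls u = 1%N -> cls v = 2%N -> A u v = 0.
Proof.
move=> cu cv; have lu : A u u != 0 by rewrite cls_loop cu.
have lv : A v v != 0 by rewrite cls_loop cv orbT.
have [x [Axx E]] := cls12 lu; move: cu cv; rewrite !E //.
case: (eqVneq (A x u) 0) => //= Axu _; case: (eqVneq (A x v) 0) => //= Axv _.
case: (eqVneq (A u v) 0) => // Auv; exfalso.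
have Aux : A u x != 0 by rewrite symA.
by move: (L2 lu Aux Auv); rewrite Axv eqxx.
Qed.

Lemma Floop u v : (cls u == 1%N) || (cls u == 2%N) -> ~~ ((cls v == 1%N) || (cls v == 2%N)) ->
  A u v = 0.
Proof. by rewrite -!cls_loop => lu /negPn /eqP lv; apply: L1. Qed.

Lemma F33 u v : cls u = 3%N -> cls v = 3%N -> A u v = 0.
Proof.
move=> cu cv; have [Auu _ colu] := cls34 (u := u) ltac:(by rewrite cu).
have [Avv _ colv] := cls34 (u := v) ltac:(by rewrite cv).
case: (eqVneq (A u v) 0) => // Auv; exfalso.
by move: (color_diff Auu Avv Auv); rewrite colu colv cu cv.
Qed.

Lemma F44 u v : cls u = 4%N -> cls v = 4%N -> A u v = 0.
Proof.
move=> cu cv; have [Auu _ colu] := cls34 (u := u) ltac:(by rewrite cu orbT).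
have [Avv _ colv] := cls34 (u := v) ltac:(by rewrite cv orbT).
case: (eqVneq (A u v) 0) => // Auv; exfalso.
by move: (color_diff Auu Avv Auv); rewrite colu colv cu cv.
Qed.

Lemma Fcol v : cls v = 4%N -> exists u, cls u = 3%N /\ A u v != 0.
Proof.
move=> cv; have [Avv [w Avw] colv] := cls34 (u := v) ltac:(by rewrite cv orbT).
have Aww : A w w = 0 by apply: (L1'' (v := v)); rewrite // symA.
have Awv : A w v != 0 by rewrite symA.
exists w; split => //.
rewrite cls_unl //; last by exists v.
by move: (color_diff Avv Aww Avw); rewrite colv cv /=; case: (color w).
Qed.

Lemma Fz u v :
  ~~ (((cls u == 3%N) && (cls v == 4%N)) || ((cls u == 4%N) && (cls v == 3%N)) ||
      ((cls u == cls v) && ((cls u == 1%N) || (cls u == 2%N)))) -> A u v = 0.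
Proof.
have lu := cls_lt u; have lv := cls_lt v.
case cu: (cls u) lu => [|[|[|[|[|k]]]]] // _; first by move=> _; apply: cls0.
all: case cv: (cls v) lv => [|[|[|[|[|k]]]]] // _ //= _.
all: try (by rewrite symA; apply: cls0).
all: try (by apply: F12).
all: try (by rewrite symA; apply: F12).
all: try (by apply: F33).
all: try (by apply: F44).
all: try (by apply: Floop; rewrite ?cu ?cv).
all: try (by rewrite symA; apply: Floop; rewrite ?cu ?cv).
Qed.

End Struct.

Section Final.
Variables (R : realFieldType) (n : nat) (A : 'M[R]_n).
Hypothesis nonneg : forall i j, 0 <= A i j.
Hypothesis symA : forall i j, A i j = A j i.
Hypothesis rk3 : forall I J : {set 'I_n}, #|I| = #|J| -> (2 < #|I|)%N -> sym_trop_singular A I J.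
Hypothesis rowz : forall i, exists j, A i j = 0.

Ltac posc_tac := rewrite /posc /=; repeat (case: ifP => ?); try done; lia.

Lemma structure :
  exists (n0 n1 n2 n3 n4 : nat) (h : (n0 + (n1 + (n2 + (n3 + n4))))%N = n)
          (s : 'S_n) (B1 : 'M[R]_n1) (B2 : 'M[R]_n2) (C : 'M[R]_(n3, n4)),
     [/\ (\matrix_(i, j) A (s i) (s j)) = castmx (h, h) (blk5 n0 B1 B2 C),
         B1^T = B1 /\ (forall i j, 0 < B1 i j),
         B2^T = B2 /\ (forall i j, 0 < B2 i j),
         (forall i j, 0 <= C i j)
       & (forall j, exists i, C i j != 0)].
Proof.
have [n0 [n1 [n2 [n3 [n4 [h [s Hs]]]]]]] := sort_perm (@cls_lt R n A).
set M := \matrix_(i, j) A (s i) (s j).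
pose M' := castmx (esym h, esym h) M.
have EM : forall i j, M' i j = A (s (cast_ord h i)) (s (cast_ord h j)).
  by move=> i j; rewrite castmxE mxE; congr (A (s _) (s _)); apply: val_inj.
exists n0, n1, n2, n3, n4, h, s, (ulsubmx (drsubmx M')), (ulsubmx (drsubmx (drsubmx M'))),
  (ursubmx (drsubmx (drsubmx (drsubmx M')))).
split.
- apply: (canRL (castmxKV h h)); change (M' = blk5 n0 (ulsubmx (drsubmx M')) (ulsubmx (drsubmx (drsubmx M'))) (ursubmx (drsubmx (drsubmx (drsubmx M'))))).
  rewrite /blk5 -{1}[M'](submxK); congr block_mx.
  4: rewrite -{1}[drsubmx M'](submxK); congr block_mx.
  6: rewrite -{1}[drsubmx (drsubmx M')](submxK); congr block_mx.
  8: rewrite -{1}[drsubmx (drsubmx (drsubmx M'))](submxK); congr block_mx.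
  all: try (apply/matrixP => i j; rewrite !mxE EM;
    apply: (Fz nonneg symA rk3 rowz); rewrite !Hs; move: (ltn_ord i) (ltn_ord j) => /= ? ?; posc_tac).
  by apply/matrixP => i j; rewrite !mxE !EM symA.
- split; first by apply/matrixP => i j; rewrite !mxE !EM symA.
  move=> i j; rewrite !mxE EM lt0r nonneg andbT.
  by apply: (F11 nonneg symA rk3 rowz); rewrite Hs; move: (ltn_ord i) (ltn_ord j) => /= ? ?; posc_tac.
- split; first by apply/matrixP => i j; rewrite !mxE !EM symA.
  move=> i j; rewrite !mxE EM lt0r nonneg andbT.
  by apply: (F22 nonneg symA rk3); rewrite Hs; move: (ltn_ord i) (ltn_ord j) => /= ? ?; posc_tac.
- by move=> i j; rewrite !mxE EM nonneg.
- move=> j.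
  set v := s (cast_ord h (rshift n0 (rshift n1 (rshift n2 (rshift n3 j))))).
  have cv : cls A v = 4%N by rewrite /v Hs; move: (ltn_ord j) => /= ?; posc_tac.
  have [u [cu Auv]] := Fcol nonneg symA rk3 rowz cv.
  pose p := (s^-1 u)%g.
  have sp : s p = u by rewrite /p permKV.
  have cp : posc n0 n1 n2 n3 p = 3%N by rewrite -Hs sp.
  have hp : (n0 + n1 + n2 <= p < n0 + n1 + n2 + n3)%N.
    by move: cp; rewrite /posc; repeat (case: ifP => ?); try done; lia.
  have ilt : (p - (n0 + n1 + n2) < n3)%N by lia.
  exists (Ordinal ilt); rewrite !mxE EM.
  have -> : cast_ord h (rshift n0 (rshift n1 (rshift n2 (lshift n4 (Ordinal ilt))))) = p.
    by apply: val_inj => /=; lia.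
  by rewrite sp.
Qed.
End Final.

Unset Implicit Arguments.

Theorem lemma4 (R : realFieldType) (n : nat) (A : 'M[R]_n) :
  A^T = A -> normalized A -> sym_trop_rank_is A 2 ->
  (exists (n0 n1 n2 n3 n4 : nat) (h : (n0 + (n1 + (n2 + (n3 + n4))))%N = n)
          (s : 'S_n) (B1 : 'M[R]_n1) (B2 : 'M[R]_n2) (C : 'M[R]_(n3, n4)),
     [/\ (\matrix_(i, j) A (s i) (s j)) = castmx (h, h) (blk5 n0 B1 B2 C),
         B1^T = B1 /\ (forall i j, 0 < B1 i j),
         B2^T = B2 /\ (forall i j, 0 < B2 i j),
         (forall i j, 0 <= C i j)
       & (forall j, exists i, C i j != 0)])
  /\ A != 0 /\ ~ (forall i j, 0 < A i j).
Proof.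
move=> AT [rowN _] [[I [J [cI cJ ns]]] rk].
have symA : forall i j, A i j = A j i by move=> i j; rewrite -{1}AT mxE.
have nonneg : forall i j, 0 <= A i j by move=> i j; case: (rowN i) => h _; apply: h.
have rowz : forall i, exists j, A i j = 0 by move=> i; case: (rowN i).
split; first exact: (structure nonneg symA rk rowz).
have /cards2P [a [b [ab EI]]] : #|I| == 2%N by rewrite cI.
have /cards2P [c [d [cd EJ]]] : #|J| == 2%N by rewrite cJ.
split; last first.
  by move=> H; have [j Aaj] := rowz a; have := H a j; rewrite Aaj ltxx.
apply/eqP => A0; apply: ns; rewrite EI EJ.
pose r1 := fun x => if x == a then c else d.
pose r2 := fun x => if x == a then d else c.
have c2 : #|[set a; b]| = #|[set c; d]| by rewrite !cards2 ab cd.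
have ba : b != a by rewrite eq_sym.
have bij1 : is_bij [set a; b] [set c; d] r1.
  apply: bij_of => //; last by move=> x _; rewrite /r1; case: ifP; rewrite !inE eqxx ?orbT.
  move=> x y; rewrite !inE /r1 => /orP[]/eqP-> /orP[]/eqP->; rewrite ?eqxx ?(negbTE ba) //;
  by move=> e; rewrite e eqxx in cd.
have bij2 : is_bij [set a; b] [set c; d] r2.
  apply: bij_of => //; last by move=> x _; rewrite /r2; case: ifP; rewrite !inE eqxx ?orbT.
  move=> x y; rewrite !inE /r2 => /orP[]/eqP-> /orP[]/eqP->; rewrite ?eqxx ?(negbTE ba) //;
  by move=> e; rewrite e eqxx in cd.
have v0 : forall r, mono_val A [set a; b] r = 0.
  by move=> r; rewrite /mono_val big1 // => i _; rewrite A0 mxE.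
exists r1, r2; split => //; first by move=> r _; rewrite !v0.
  by rewrite !v0.
move/(_ a c); rewrite /mono_exp => E.
have aS : a \in [set i in [set a; b] | ((i == a) && (r1 i == c)) || ((i == c) && (r1 i == a))].
  by rewrite !inE /r1 !eqxx.
have : #|[set i in [set a; b] | ((i == a) && (r2 i == c)) || ((i == c) && (r2 i == a))]| = 0%N.
  apply/eqP; rewrite cards_eq0; apply/eqP/setP => i; rewrite !inE /r2.
  case: (eqVneq i a) => [->|ia] /=.
    rewrite [d == c]eq_sym (negbTE cd) /=; case: (eqVneq a c) => [ac|] //=.
    by rewrite ac [d == c]eq_sym (negbTE cd).
  by case: (eqVneq i c) => [<-|]; rewrite ?(negbTE ia) ?andbF.
rewrite -E => /eqP; rewrite cards_eq0 => /eqP e.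
by rewrite e inE in aS.
Qed.
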